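(* Let $G$ be a finite simple $r$-regular graph, where $r \geq 3$ is odd, and let $k \geq 5$ be an integer. Then $G$ is completely $k$-magic.
   Context: For an integer $k \geq 2$, $\mathbb{Z}_k$ is the integers modulo $k$. For $c \in \mathbb{Z}_k$, a graph $G$ is $c$-sum $k$-magic if there is an edge labeling $\ell : E(G) \to \mathbb{Z}_k \setminus \{0\}$ such that for every vertex $v$, $\sum_{u \in N(v)} \ell(uv) \equiv c \pmod k$. $G$ is completely $k$-magic if it is $c$-sum $k$-magic for every $c \in \mathbb{Z}_k$. *)

(* Defs.v *)
From mathcomp Require Import all_boot all_order all_algebra.
Set Implicit Arguments. Unset Strict Implicit. Unset Printing Implicit Defensive.
Import GRing.Theory.
Local Open Scope ring_scope.

Definition simple_graph (T : finType) (e : rel T) : Prop :=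
  symmetric e /\ irreflexive e.

Definition regular (T : finType) (e : rel T) (r : nat) : Prop :=
  forall v : T, #|[set u | e v u]| = r.

(* An edge labeling by 'Z_k \ {0}, represented as a symmetric function on
   ordered pairs; only its values on edges matter. *)
Definition csum_kmagic (T : finType) (e : rel T) (k : nat) (c : 'Z_k) : Prop :=
  exists l : T -> T -> 'Z_k,
    (forall u v, e u v -> l u v = l v u) /\
    (forall u v, e u v -> l u v != 0) /\
    (forall v, \sum_(u | e v u) l v u = c).

Definition completely_kmagic (T : finType) (e : rel T) (k : nat) : Prop :=
  forall c : 'Z_k, csum_kmagic e c.

(* Main.v *)
Require Import Defs.
From mathcomp Require Import all_boot all_order all_algebra.
From mathcomp Require Import all_fingroup zify.
Set Implicit Arguments. Unset Strict Implicit. Unset Printing Implicit Defensive.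

Definition NS (T T' : finType) (N : T -> {set T'}) (S : {set T}) :=
  \bigcup_(x in S) N x.

Lemma hall (T T' : finType) (f0 : T -> T') : forall (A : {set T}) (N : T -> {set T'}),
  (forall S : {set T}, S \subset A -> #|S| <= #|NS N S|) ->
  exists f : T -> T', {in A &, injective f} /\ {in A, forall x, f x \in N x}.
Proof.
move=> A; have [n] := ubnP #|A|; elim: n A => // n IH A ltA N hc.
case: (set_0Vmem A) => [-> | [x0 x0A]].
  by exists f0; split => ?; rewrite inE.
case: (boolP [exists S : {set T}, [&& S \proper A, S != set0 & #|NS N S| <= #|S|]]).
- case/existsP => S /and3P [pSA S0 tight].
  have sSA := proper_sub pSA.
  have ltS : #|S| < n.
    by apply: leq_trans (proper_card pSA) _; rewrite -ltnS.
  have [f1 [inj1 mem1]] := IH S ltS N (fun U sU => hc U (subset_trans sU sSA)).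
  have S0' : 0 < #|S| by rewrite card_gt0.
  have cAS : #|A :\: S| = #|A| - #|S|.
    by rewrite cardsD (setIidPr sSA).
  have ltA' : #|A :\: S| < n by rewrite cAS; lia.
  pose N' := fun x => N x :\: NS N S.
  have hc' : forall U : {set T}, U \subset A :\: S -> #|U| <= #|NS N' U|.
    move=> U sU.
    have sUA : U \subset A by apply: subset_trans sU (subsetDl _ _).
    have dUS : U :&: S = set0.
      apply/setP => x; rewrite !inE; apply/negbTE; apply/andP => [[xU xS]].
      by move: (subsetP sU x xU); rewrite inE xS.
    have h1 := hc (U :|: S) ltac:(by rewrite subUset sUA sSA).
    have sub : NS N (U :|: S) :\: NS N S \subset NS N' U.
      apply/subsetP => y; rewrite inE => /andP [ynS /bigcupP [x]].
      rewrite inE => /orP [xU | xS] yN.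
        by apply/bigcupP; exists x => //; rewrite inE ynS.
      by move: ynS; rewrite (_ : y \in NS N S) //; apply/bigcupP; exists x.
    have c1 := subset_leq_card sub.
    have c2 : #|NS N (U :|: S) :&: NS N S| <= #|NS N S| by apply: subset_leq_card; apply: subsetIr.
    move: c1; rewrite cardsD => c1.
    have c3 : #|U :|: S| = #|U| + #|S| by rewrite cardsU dUS cards0 subn0.
    lia.
  have [f2 [inj2 mem2]] := IH (A :\: S) ltA' N' hc'.
  exists (fun x => if x \in S then f1 x else f2 x); split.
    move=> x y xA yA /=.
    case: (boolP (x \in S)) => xS; case: (boolP (y \in S)) => yS.
    + exact: inj1.
    + move=> e; have := mem2 y ltac:(by rewrite inE yS yA); rewrite inE -e => /andP [/negP []].
      by apply/bigcupP; exists x => //; apply: mem1.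
    + move=> e; have := mem2 x ltac:(by rewrite inE xS xA); rewrite inE e => /andP [/negP []].
      by apply/bigcupP; exists y => //; apply: mem1.
    + by apply: inj2; rewrite inE ?xS ?yS.
  move=> x xA /=; case: (boolP (x \in S)) => xS; first exact: mem1.
  by have := mem2 x ltac:(by rewrite inE xS xA); rewrite inE => /andP [].
- move/existsPn => slack.
  have hx0 := hc [set x0] ltac:(by rewrite sub1set).
  rewrite cards1 /NS big_set1 card_gt0 in hx0.
  case/set0Pn: hx0 => y0 y0N.
  have cA : #|A| = #|A :\ x0|.+1 by rewrite (cardsD1 x0 A) x0A.
  have ltA' : #|A :\ x0| < n by lia.
  pose N' := fun x => N x :\ y0.
  have hc' : forall U : {set T}, U \subset A :\ x0 -> #|U| <= #|NS N' U|.
    move=> U sU.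
    case: (set_0Vmem U) => [-> | [u uU]]; first by rewrite cards0.
    have sUA : U \subset A by apply: subset_trans sU (subD1set _ _).
    have pUA : U \proper A.
      rewrite properEneq sUA andbT; apply/eqP => eUA.
      by have := subsetP sU x0; rewrite eUA x0A !inE eqxx => /(_ isT).
    have := slack U; rewrite pUA /= => /negP hU.
    have lt1 : #|U| < #|NS N U|.
      rewrite ltnNge; apply/negP => h; apply: hU; apply/andP; split => //.
      by apply/set0Pn; exists u.
    have sub : NS N U :\ y0 \subset NS N' U.
      apply/subsetP => y; rewrite inE => /andP [yy0 /bigcupP [x xU yN]].
      by apply/bigcupP; exists x => //; rewrite inE yy0.
    have c1 := subset_leq_card sub.
    have c2 := cardsD1 y0 (NS N U).
    lia.
  have [f2 [inj2 mem2]] := IH (A :\ x0) ltA' N' hc'.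
  exists (fun x => if x == x0 then y0 else f2 x); split.
    move=> x y xA yA /=.
    case: (eqVneq x x0) => [->|xx0]; case: (eqVneq y x0) => [->|yx0] //.
    + move=> e; have := mem2 y ltac:(by rewrite !inE yx0 yA); rewrite !inE -e eqxx //.
    + move=> e; have := mem2 x ltac:(by rewrite !inE xx0 xA); rewrite !inE e eqxx //.
    + by apply: inj2; rewrite !inE ?xx0 ?yx0.
  move=> x xA /=; case: (eqVneq x x0) => [->|xx0] //.
  by have := mem2 x ltac:(by rewrite !inE xx0 xA); rewrite !inE => /andP [].
Qed.

Lemma card_rel (T : finType) (P : pred T) : #|[set y | P y]| = \sum_y (P y : nat).
Proof. by rewrite -sum1_card big_mkcond /=; apply: eq_bigr => y _; rewrite inE; case: (P y). Qed.

Lemma hall_reg (T : finType) d (R : rel T) : 0 < d ->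
  (forall v, #|[set u | R v u]| = d) -> (forall u, #|[set v | R v u]| = d) ->
  exists p : {perm T}, forall v, R v (p v).
Proof.
move=> d0 ho hi.
pose N := fun v => [set u | R v u].
have hc : forall S : {set T}, S \subset setT -> #|S| <= #|NS N S|.
  move=> S _.
  rewrite -(leq_pmul2l d0).
  have e1 : d * #|S| = \sum_(x in S) \sum_y (R x y : nat).
    rewrite -sum1_card big_distrr /=; apply: eq_bigr => x _.
    by rewrite muln1 -card_rel ho.
  rewrite e1 exchange_big /= (bigID (fun y => y \in NS N S)) /=.
  rewrite [X in _ + X]big1 ?addn0; last first.
    move=> y yN; apply: big1 => x xS; case: (boolP (R x y)) => // Rxy.
    by move: yN; rewrite (_ : y \in NS N S) //; apply/bigcupP; exists x => //; rewrite inE.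
  rewrite mulnC -sum_nat_const.
  apply: leq_sum => y _.
  rewrite -(hi y) card_rel.
  rewrite [X in _ <= X](bigID (fun x => x \in S)) /=; exact: leq_addr.
have [f' [inj' mem']] := hall id hc.
have injf : injective f' by move=> x y; apply: inj'; rewrite inE.
exists (perm injf) => v; rewrite permE.
by have := mem' v (in_setT v); rewrite inE.
Qed.

Lemma konig (T : finType) d : forall R : rel T,
  (forall v, #|[set u | R v u]| = d) -> (forall u, #|[set v | R v u]| = d) ->
  exists s : 'I_d -> {perm T}, (forall i v, R v (s i v)) /\ (forall v, injective (fun i => s i v)).
Proof.
elim: d => [|d IH] R ho hi.
  by exists (fun _ => 1%g); split => [[m hm]|v [m hm]].
have [p hp] := hall_reg (ltn0Sn d) ho hi.
pose R' := [rel v u | R v u && (u != p v)].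
have ho' : forall v, #|[set u | R' v u]| = d.
  move=> v; have := cardsD1 (p v) [set u | R v u].
  rewrite ho inE hp add1n => [[->]].
  by apply: eq_card => u; rewrite !inE andbC.
have hi' : forall u, #|[set v | R' v u]| = d.
  move=> u; have := cardsD1 ((p^-1)%g u) [set v | R v u].
  have := hp ((p^-1)%g u); rewrite permKV => hpu.
  rewrite hi inE hpu add1n => [[->]].
  apply: eq_card => v; rewrite !inE andbC; congr (_ && _).
  apply/idP/idP; apply: contra => /eqP e; apply/eqP.
    by rewrite e ?permKV ?permK.
    by rewrite e ?permKV ?permK.
have [t [ht injt]] := IH R' ho' hi'.
exists (fun i => if unlift ord0 i is Some j then t j else p); split.
  move=> i v; case: (unliftP ord0 i) => [j _|_] //.
  by have /andP [] := ht j v.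
move=> v i i' /=.
case: (unliftP ord0 i) => [j ->|->]; case: (unliftP ord0 i') => [j' ->|->] //.
- by move/injt ->.
- by move=> e; have /andP [_] := ht j v; rewrite e eqxx.
- by move=> e; have /andP [_] := ht j' v; rewrite -e eqxx.
Qed.
Import GRing.Theory.

Lemma dist r : forall T lo hi, lo <= hi -> lo * r <= T <= hi * r ->
  exists n : nat -> nat, (forall i, lo <= n i <= hi) /\ \sum_(i < r) n i = T.
Proof.
elim: r => [|r IH] T lo hi lh /andP [h1 h2].
  exists (fun _ => lo); split; first by move=> i; rewrite leqnn lh.
  by rewrite big_ord0; move: h2; rewrite muln0 leqn0 => /eqP.
pose x := minn hi (T - lo * r).
have [n [hn sn]] : exists n : nat -> nat, (forall i, lo <= n i <= hi) /\ \sum_(i < r) n i = T - x.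
  apply: IH => //; move: h1 h2; rewrite /x !mulnS; set P := lo * r; set Q := hi * r.
  have : P <= Q by rewrite leq_mul2r lh orbT.
  move=> PQ h1 h2; apply/andP; split; lia.
exists (fun i => if i is j.+1 then n j else x); split.
  case=> [|i] //; move: h1; rewrite /x mulnS; set P := lo * r => h1.
  apply/andP; split; lia.
rewrite big_ord_recl /= sn.
move: h1 h2; rewrite /x !mulnS; set P := lo * r; set Q := hi * r.
have : P <= Q by rewrite leq_mul2r lh orbT.
move=> PQ h1 h2; lia.
Qed.

Local Open Scope ring_scope.

Lemma ZpE K m : (1 < K)%N -> (((m %% K)%N)%:R : 'Z_K) = m%:R.
Proof. by move=> K1; rewrite Zp_nat_mod. Qed.

Lemma Zp0 K m : (1 < K)%N -> (((K * m)%N)%:R : 'Z_K) = 0.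
Proof. by move=> K1; rewrite natrM pchar_Zp // mul0r. Qed.

Lemma params k' r (c : 'Z_(k'.+2)) : (5 <= k'.+2)%N -> (3 <= r)%N -> odd r ->
  exists (a : nat) (s : bool) (n : nat -> nat),
   (forall i j, 0 < a + n i + n j < k'.+2)%N /\
   (-1) ^+ s * ((r * a + 2 * \sum_(i < r) n i)%N)%:R = c.
Proof.
move=> k5 r3 rodd.
set K := k'.+2.
have K1 : (1 < K)%N by [].
have cE : c = (val c)%:R by rewrite natr_Zp.
set c0 := val c.
have c0K : (c0 < K)%N by apply: ltn_ord.
case: (boolP (~~ odd K && ~~ odd c0)) => [/andP [Ke ce] | hodd].
-
  set H := K./2.
  have KH : K = (2 * H)%N by rewrite mul2n even_halfK.
  have H3 : (3 <= H)%N.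
    have : K <> 5%N by move=> e; move: Ke; rewrite e.
    lia.
  set u := (c0./2 + H * r - r)%N.
  set T := (r + u %% H)%N.
  have uH : (u %% H < H)%N by rewrite ltn_mod; lia.
  have [n [hn sn]] := @dist r T 1 (H - 1) ltac:(lia) ltac:(
    apply/andP; split; [rewrite /T; lia | rewrite /T; nia]).
  exists 0%N, false, n; split.
    move=> i j; move: (hn i) (hn j) => /andP [h1 h2] /andP [h3 h4]; lia.
  rewrite expr0 mul1r muln0 add0n sn /T mulnDr muln_modr -KH natrD ZpE // -natrD cE.
  have -> : (2 * r + 2 * u = c0 + K * r)%N.
    have hc : c0 = (2 * c0./2)%N by rewrite mul2n even_halfK.
    have hr : (r <= H * r)%N by rewrite leq_pmull; lia.
    rewrite /u KH; lia.
  by rewrite natrD Zp0 // addr0.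
-
  set W := (K - 2)./2.
  have W2 : (2 * W <= K - 2)%N by rewrite mul2n halfK; lia.
  have lab : forall n : nat -> nat, (forall i, 0 <= n i <= W)%N ->
      forall i j, (0 < 1 + n i + n j < K)%N.
    move=> n hn i j; move: (hn i) (hn j) => /andP [_ h2] /andP [_ h4]; lia.
  case: (boolP (odd K)) => Ko.
  +
    have u2 : (2%:R : 'Z_K) \is a GRing.unit.
      by rewrite unitZpE // coprime_sym prime_coprime // dvdn2 Ko.
    set x := (c - r%:R) / 2%:R.
    set T := val x.
    have TK : (T < K)%N by apply: ltn_ord.
    have eT : (((r * 1 + 2 * T)%N)%:R : 'Z_K) = c.
      rewrite muln1 natrD natrM /T natr_Zp /x mulrC divrK //.
      by rewrite addrC subrK.
    case: (boolP ((K == 5%N) && (r == 3%N))) => [/andP [/eqP K5 /eqP r5] | nspec].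
    * have W1 : W = 1%N by rewrite /W K5.
      case: (leqP T 3%N) => T3.
        have [n [hn sn]] := @dist r T 0 W ltac:(lia) ltac:(rewrite r5 W1; lia).
        by exists 1%N, false, n; split; [apply: lab | rewrite expr0 mul1r sn].
      have [n [hn sn]] := @dist r 3 0 W ltac:(lia) ltac:(rewrite r5 W1; lia).
      exists 1%N, true, n; split; first by apply: lab.
      rewrite sn -eT r5.
      have -> : T = 4%N by lia.
      rewrite expr1 mulN1r; apply/eqP; rewrite eq_sym -subr_eq0 opprK -natrD.
      by rewrite (_ : (_ + _)%N = (K * 4)%N) ?Zp0 // K5.
    * have [n [hn sn]] := @dist r T 0 W ltac:(lia) ltac:(
        apply/andP; split; [lia|]; rewrite /W;
        have : odd K by []; move: nspec TK; set K0 := K; move=> nspec TK oK;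
        rewrite -(odd_double_half K0) oK /= in nspec TK *; nia).
      by exists 1%N, false, n; split; [apply: lab | rewrite expr0 mul1r sn].
  +
    have co : odd c0 by move: hodd; rewrite Ko /= negbK.
    set H := K./2.
    have KH : K = (2 * H)%N by rewrite mul2n even_halfK.
    have H3 : (3 <= H)%N.
      have : K <> 5%N by move=> e; move: Ko; rewrite e.
      lia.
    have WH : W = (H - 1)%N by rewrite /W /H; lia.
    set u := ((c0 + K * r - r)./2)%N.
    set T := (u %% H)%N.
    have uH : (T < H)%N by rewrite ltn_mod; lia.
    have [n [hn sn]] := @dist r T 0 W ltac:(lia) ltac:(apply/andP; split; [lia|]; rewrite WH; nia).
    exists 1%N, false, n; split; first by apply: lab.
    rewrite expr0 mul1r sn /T muln_modr -KH natrD ZpE // -natrD cE.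
    have -> : (r * 1 + 2 * u = c0 + K * r)%N.
      have hr : (r <= K * r)%N by rewrite leq_pmull; lia.
      have ev : ~~ odd (c0 + K * r - r)%N.
        rewrite oddB ?oddD ?oddM ?co ?(negbTE Ko) ?rodd //; lia.
      have := even_halfK ev; rewrite -/u -mul2n; lia.
    by rewrite natrD Zp0 // addr0.
Qed.

Lemma reidx (T : finType) r (P : pred T) (g : 'I_r -> T) (F : T -> nat) :
  injective g -> (forall i, P (g i)) -> #|[set u | P u]| = r ->
  (\sum_(u | P u) F u = \sum_(i < r) F (g i))%N.
Proof.
move=> ig Pg cP.
have eS : g @: setT = [set u | P u].
  apply/eqP; rewrite eqEcard; apply/andP; split.
    by apply/subsetP => u /imsetP [i _ ->]; rewrite inE.
  by rewrite cP card_imset // cardsT card_ord.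
rewrite (eq_bigl (fun u => u \in g @: setT)); last by move=> u; rewrite eS inE.
rewrite big_imset /=; last by move=> x y _ _; apply: ig.
by apply: eq_bigl => i; rewrite inE.
Qed.

Theorem theorem13 (T : finType) (e : rel T) (r k : nat) :
  simple_graph e -> regular e r -> (3 <= r)%N -> odd r -> (5 <= k)%N ->
  completely_kmagic e k.
Proof.
move=> [esym eirr] reg r3 rodd.
case: k => [|[|k']] // k5 c.
have [a [s [n [hlab hsum]]]] := params c k5 r3 rodd.
have hi : forall u, #|[set v | e v u]| = r.
  by move=> u; rewrite -(reg u); apply: eq_card => v; rewrite !inE esym.
have [sg [hsg injsg]] := konig reg hi.
pose col v u : nat := if [pick i | sg i v == u] is Some i then val i else 0%N.
have colE : forall i v, col v (sg i v) = i.
  move=> i v; rewrite /col; case: pickP => [j /eqP /(injsg v) -> //|].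
  by move/(_ i); rewrite eqxx.
exists (fun u v => (-1) ^+ s * ((a + n (col u v) + n (col v u))%N)%:R); split; [|split].
- by move=> u v _; rewrite addnAC.
- move=> u v _.
  have h : (((a + n (col u v) + n (col v u))%N)%:R : 'Z_(k'.+2)) != 0.
    apply/eqP => h; have := congr1 (fun z : 'Z_(k'.+2) => nat_of_ord z) h; rewrite /= val_Zp_nat // modn_small /=.
      by move: (hlab (col u v) (col v u)) => /andP [] /[swap] _; case: (_ + _)%N.
    by case/andP: (hlab (col u v) (col v u)).
  by case: s hsum => _; rewrite ?expr0 ?mul1r ?expr1 ?mulN1r ?oppr_eq0.
- move=> v; rewrite -mulr_sumr -natr_sum -hsum; congr (_ * _%:R).
  rewrite !big_split /=.
  have e1 : (\sum_(u | e v u) a = r * a)%N.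
    rewrite sum_nat_const.
    have -> : #|e v| = r by rewrite -(reg v); apply: eq_card => u; rewrite inE.
    by [].
  have e2 : (\sum_(u | e v u) n (col v u) = \sum_(i < r) n i)%N.
    rewrite (@reidx _ r (e v) (fun i => sg i v) (fun u => n (col v u))) //.
    by apply: eq_bigr => i _; rewrite colE.
  have e3 : (\sum_(u | e v u) n (col u v) = \sum_(i < r) n i)%N.
    rewrite (@reidx _ r (e v) (fun i => (sg i)^-1%g v) (fun u => n (col u v))) //.
    + apply: eq_bigr => i _; have := colE i ((sg i)^-1%g v); rewrite permKV => ->; done.
    + move=> i j /= eij; apply: (injsg ((sg i)^-1%g v)) => /=.
      by rewrite {2}eij !permKV.
    + by move=> i; have := hsg i ((sg i)^-1%g v); rewrite permKV esym.
  by rewrite e1 e2 e3 -addnA addnn -mul2n.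
Qed.
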